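(* In the transaction packaging game described in the context, let $$\hat p(\mathsf{tx})=\frac{1}{|M|}\left(k+\sum_{\mathsf{tx}'\in M}\frac{\ln v(\mathsf{tx})-\ln v(\mathsf{tx}')}{\lambda}\right)\quad(\mathsf{tx}\in M),$$ and for $x\in\mathbb{R}$ define $p_x:M\to\mathbb{R}$ by $p_x(\mathsf{tx})=0$ if $\hat p(\mathsf{tx})\le x$, $p_x(\mathsf{tx})=\hat p(\mathsf{tx})-x$ if $x<\hat p(\mathsf{tx})<x+1$, and $p_x(\mathsf{tx})=1$ if $\hat p(\mathsf{tx})\ge x+1$. Let $\hat x\in\mathbb{R}$ be the smallest solution of the equation $\sum_{\mathsf{tx}\in M}\min(\max(\hat p(\mathsf{tx})-x,0),1)=k$. Then $p_{\hat x}$ satisfies (1) $p_{\hat x}(\mathsf{tx})\in[0,1]$ for all $\mathsf{tx}\in M$, and (2) $\sum_{\mathsf{tx}\in M}p_{\hat x}(\mathsf{tx})=k$; and the corresponding strategy $\sigma$ of $p_{\hat x}$ (a mixed strategy with $p^\sigma(\mathsf{tx})=p_{\hat x}(\mathsf{tx})$ for all $\mathsf{tx}\in M$) is an equilibrium strategy.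
   Context: Transaction packaging game. Fix a positive integer $k$ (block capacity), a real $\lambda>0$ (network latency parameter), a finite set $M$ (the mempool) of transactions with $|M|\ge k$, and a gas price function $v:M\to(0,\infty)$. Miners are indexed by $i\in[0,1]$. A pure strategy of a miner is a subset $D\subseteq M$ with $|D|=k$; let $\mathcal{S}$ be the set of such subsets. A mixed strategy is a probability distribution $\sigma$ on $\mathcal{S}$, and its marginal probability is $p^\sigma(\mathsf{tx})=\sum_{D\in\mathcal{S}}\sigma(D)\mathbf{1}[\mathsf{tx}\in D]$. A corresponding strategy of a function $p:M\to[0,1]$ is a mixed strategy $\sigma$ with $p^\sigma(\mathsf{tx})=p(\mathsf{tx})$ for all $\mathsf{tx}\in M$. Conditional on miner $i$ mining a block $B_i$ (drawn from her mixed strategy $\sigma_i$), the number $\gamma$ of other blocks mined is distributed as $\mathrm{Poisson}(\lambda)$; they are mined by miners chosen independently and uniformly at random from $[0,1]$, each such miner $j$ producing a block $B_j$ drawn independently from her mixed strategy $\sigma_j$. The utility of miner $i$ is $u_i(\sigma_i,\sigma_{-i})=\sum_{\mathsf{tx}\in M}p^{\sigma_i}(\mathsf{tx})\,v(\mathsf{tx})\,\Pr[\text{no other mined block }B_j\ (j\neq i)\text{ contains }\mathsf{tx}]$. A mixed strategy $\sigma^*$ is an equilibrium strategy if for every $i\in[0,1]$ and every mixed strategy $\sigma$, $u_i(\sigma,\sigma^*_{-i})\le u_i(\sigma^*,\sigma^*_{-i})$, where $\sigma^*_{-i}$ denotes the profile in which all miners other than $i$ use $\sigma^*$. *)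

(* Defs.v *)
From HB Require Import structures.
From mathcomp Require Import all_boot all_order all_algebra.
From mathcomp Require Import all_classical all_reals all_analysis.
Set Implicit Arguments. Unset Strict Implicit. Unset Printing Implicit Defensive.
Import Order.TTheory GRing.Theory Num.Theory.
Import numFieldNormedType.Exports.
Local Open Scope ring_scope.

Section Game.
Variables (R : realType) (T : finType).

(* A mixed strategy: a probability distribution on the pure strategies,
   i.e. on subsets D of the mempool T with #|D| = k. *)
Definition mixed_strategy (k : nat) (s : {set T} -> R) : Prop :=
  (forall D : {set T}, 0 <= s D) /\ (forall D : {set T}, #|D| != k -> s D = 0) /\
  \sum_(D : {set T} | #|D| == k) s D = 1.

Definition marginal (k : nat) (s : {set T} -> R) (tx : T) : R :=
  \sum_(D : {set T} | #|D| == k) s D * (tx \in D)%:R.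

(* Pr[no other mined block contains tx] when every other miner plays sstar:
   gamma ~ Poisson(lam) other blocks, each (independently) produced by a
   uniformly random miner j (a.s. j <> i, so j plays sstar) and contains tx
   with probability p^sstar(tx). *)
Definition prob_none (k : nat) (lam : R) (sstar : {set T} -> R) (tx : T) : R :=
  limn (series (fun n : nat => expR (- lam) * lam ^+ n / (n`!)%:R
                 * (1 - marginal k sstar tx) ^+ n)).

Definition utility (k : nat) (lam : R) (v : T -> R)
  (s sstar : {set T} -> R) : R :=
  \sum_(tx : T) marginal k s tx * v tx * prob_none k lam sstar tx.

(* equilibrium strategy: no miner i in [0,1] gains by deviating; the
   utility of miner i against sstar_{-i} does not depend on i. *)
Definition equilibrium (k : nat) (lam : R) (v : T -> R)
  (sstar : {set T} -> R) : Prop :=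
  mixed_strategy k sstar /\
  forall i : R, 0 <= i <= 1 ->
    forall s, mixed_strategy k s ->
      utility k lam v s sstar <= utility k lam v sstar sstar.

Definition phat (k : nat) (lam : R) (v : T -> R) (tx : T) : R :=
  (#|T|%:R)^-1 * (k%:R + \sum_(tx' : T) (ln (v tx) - ln (v tx')) / lam).

Definition p_x (k : nat) (lam : R) (v : T -> R) (x : R) (tx : T) : R :=
  let ph := phat k lam v tx in
  if ph <= x then 0 else if ph < x + 1 then ph - x else 1.

Definition xeq_lhs (k : nat) (lam : R) (v : T -> R) (x : R) : R :=
  \sum_(tx : T) Num.min (Num.max (phat k lam v tx - x) 0) 1.

End Game.

(* Main.v *)
Require Import Defs.
From mathcomp Require Import all_boot all_order all_algebra.
From mathcomp Require Import all_classical all_reals all_analysis.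
From mathcomp Require Import ring lra.
Import Order.TTheory GRing.Theory Num.Theory.
Local Open Scope ring_scope.

Section Exist.
Variables (R : realType) (T : finType) (k : nat).

Lemma sum_ind (D : {set T}) : \sum_(t : T) ((t \in D)%:R : R) = #|D|%:R.
Proof.
rewrite (eq_bigr (fun t => if t \in D then 1 else 0)); last by move=> t _; case: (t \in D).
by rewrite -big_mkcond sumr_const.
Qed.

Lemma sum_delta (a : T) : \sum_(t : T) ((t == a)%:R : R) = 1.
Proof.
rewrite (bigD1 a) //= eqxx big1 ?addr0 // => t /negbTE -> //.
Qed.

Lemma pick_min (x y : R) : 0 < x -> 0 < y ->
  exists al : R, [/\ 0 < al, al <= x, al <= y & (al = x \/ al = y)].
Proof.
move=> hx hy; have [h|h] := leP x y.
- by exists x; split => //; left.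
- by exists y; split => //; [exact: ltW | right].
Qed.

Definition frac (p : T -> R) := [set t | (0 < p t) && (p t < 1)].

Lemma base_case (p : T -> R) : (forall t, 0 <= p t <= 1) -> \sum_t p t = k%:R ->
  (forall t, t \notin frac p) ->
  exists s, mixed_strategy k s /\ forall t, marginal k s t = p t.
Proof.
move=> hp hs hf.
set D := [set t | p t == 1].
have pD t : p t = (t \in D)%:R.
  have := hf t.
  rewrite !inE negb_and -!leNgt; case/andP: (hp t) => h0 h1.
  case: eqP => [-> //|/eqP hne] /= h.
  have : p t < 1 by rewrite lt_neqAle hne h1.
  move=> hlt; case/orP: h => h; first by apply/eqP; rewrite eq_le h h0.
  by move: (lt_le_trans hlt h); rewrite ltxx.
have hD : #|D| = k.
  apply/eqP; rewrite -(eqr_nat R) -hs -sum_ind; apply/eqP.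
  by apply: eq_bigr => t _; rewrite pD.
exists (fun E => (E == D)%:R); split; [split; [|split]|].
- by move=> E; rewrite ler0n.
- by move=> E hE; case: (E =P D) hE => // ->; rewrite hD eqxx.
- rewrite (bigD1 D) /=; last by rewrite hD.
  rewrite eqxx big1 ?addr0 // => E /andP [_ /negbTE ->] //.
- move=> t; rewrite /marginal (bigD1 D) /=; last by rewrite hD.
  rewrite eqxx mul1r big1 ?addr0 -?pD //.
  by move=> E /andP [_ /negbTE ->]; rewrite mul0r.
Qed.


Lemma step (p : T -> R) a b g : (forall t, 0 <= p t <= 1) ->
  a \in frac p -> b \in frac p -> a != b -> 0 < g -> g <= 1 - p a -> g <= p b ->
  (g = 1 - p a \/ g = p b) ->
  let q := fun t => p t + g * ((t == a)%:R - (t == b)%:R) in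
  [/\ forall t, 0 <= q t <= 1, \sum_t q t = \sum_t p t & frac q \proper frac p].
Proof.
move=> hp ha hb hab g0 g1 g2 g3 q.
have qa : q a = p a + g.
  by rewrite /q eqxx (negbTE hab) /= subr0 mulr1.
have qb : q b = p b - g.
  by rewrite /q eqxx eq_sym (negbTE hab) /= sub0r mulrN1.
have qt t : t != a -> t != b -> q t = p t.
  by move=> /negbTE h1 /negbTE h2; rewrite /q h1 h2 /= subr0 mulr0 addr0.
move: ha hb; rewrite !inE => /andP [ha0 ha1] /andP [hb0 hb1].
split.
- move=> t; case: (t =P a) => [->|/eqP hta].
    by rewrite qa; apply/andP; split; lra.
  case: (t =P b) => [->|/eqP htb].
    by rewrite qb; apply/andP; split; lra.
  by rewrite qt.
- by rewrite /q big_split /= -mulr_sumr sumrB !sum_delta subrr mulr0 addr0.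
- apply/properP; split.
  + apply/fintype.subsetP => t; case: (t =P a) => [-> _ | /eqP hta].
      by rewrite inE ha0 ha1.
    case: (t =P b) => [-> _ | /eqP htb].
      by rewrite inE hb0 hb1.
    by rewrite !inE qt.
  + case: g3 => e; [exists a | exists b]; rewrite ?inE ?ha0 ?ha1 ?hb0 ?hb1 //.
    * by rewrite qa e negb_and -leNgt; apply/orP; right; lra.
    * by rewrite qb e subrr ltxx.
Qed.


Lemma not_frac (x : R) : 0 <= x <= 1 -> ~~ ((0 < x) && (x < 1)) -> x = (x == 1)%:R.
Proof.
move=> /andP [h0 h1]; rewrite negb_and -!leNgt; case: (x =P 1) => [-> //| /eqP hne] /= h.
case/orP: h => h; first by apply/eqP; rewrite eq_le h h0.
have hlt : x < 1 by rewrite lt_neqAle hne h1.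
by move: (lt_le_trans hlt h); rewrite ltxx.
Qed.


Lemma exist_strat N (p : T -> R) : (#|frac p| <= N)%N ->
  (forall t, 0 <= p t <= 1) -> \sum_t p t = k%:R ->
  exists s, mixed_strategy k s /\ forall t, marginal k s t = p t.
Proof.
elim: N p => [|N IH] p hN hp hs.
  apply: base_case => // t; apply/negP => ht.
  have : (0 < #|frac p|)%N by apply/card_gt0P; exists t.
  by rewrite leqn0 in hN; rewrite (eqP hN).
have [a ha|hnone] := pickP (fun t => t \in frac p); last first.
  by apply: base_case => // t; rewrite hnone.
have [b hb|hnb] := pickP (fun t => (t \in frac p) && (t != a)); last first.
  exfalso.
  set D := [set t | p t == 1].
  have pD t : p t = p a * (t == a)%:R + (t \in D)%:R.
    case: (t =P a) => [->|/eqP hta].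
      move: (ha); rewrite !inE => /andP [_ h1].
      by rewrite (lt_eqF h1) /= mulr1 addr0.
    have := hnb t; rewrite /= (negbTE hta) /= andbT => /negbT hf.
    rewrite inE in hf; by rewrite mulr0 add0r inE {1}(@not_frac (p t) (hp t) hf).
  have : \sum_t p t = p a + #|D|%:R.
    rewrite (eq_bigr _ (fun t _ => pD t)) big_split /= -mulr_sumr sum_delta mulr1.
    by rewrite sum_ind.
  rewrite hs; move: (ha); rewrite inE => /andP [h0 h1] e.
  have [hk|hk] := leqP k #|D|.
    move: hk; rewrite -(ler_nat R) => hk; lra.
  move: hk; rewrite -(ltr_nat R) => hk.
  have hk' : (#|D|%:R + 1 <= k%:R :> R).
    have -> : (#|D|%:R + 1 : R) = (#|D|.+1)%:R by rewrite -addn1 natrD.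
    by rewrite ler_nat; move: hk; rewrite ltr_nat.
  lra.
move: hb => /andP [hb hba].
have hpa := ha; have hpb := hb; move: hpa hpb; rewrite !inE => /andP [ha0 ha1] /andP [hb0 hb1].
have [al [al0 al1 al2 al3]] := @pick_min (1 - p a) (p b) ltac:(lra) hb0.
have [be [be0 be1 be2 be3]] := @pick_min (1 - p b) (p a) ltac:(lra) ha0.
have [q1r q1s q1f] := @step p a b al hp ha hb ltac:(by rewrite eq_sym) al0 al1 al2 al3.
have [q2r q2s q2f] := @step p b a be hp hb ha hba be0 be1 be2 be3.
pose q1 := fun t => p t + al * ((t == a)%:R - (t == b)%:R).
pose q2 := fun t => p t + be * ((t == b)%:R - (t == a)%:R).
have [s1 [hs1 hm1]] : exists s, mixed_strategy k s /\ forall t, marginal k s t = q1 t.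
  apply: (IH q1) => //; last by rewrite /q1 q1s.
  by rewrite -ltnS; exact: leq_trans (proper_card q1f) hN.
have [s2 [hs2 hm2]] : exists s, mixed_strategy k s /\ forall t, marginal k s t = q2 t.
  apply: (IH q2) => //; last by rewrite /q2 q2s.
  by rewrite -ltnS; exact: leq_trans (proper_card q2f) hN.
have hab0 : al + be != 0 by rewrite gt_eqF // addr_gt0.
exists (fun E => (be * s1 E + al * s2 E) / (al + be)).
case: hs1 => [s1p [s1z s1s]]; case: hs2 => [s2p [s2z s2s]].
split; [split; [|split]|].
- move=> E; apply: divr_ge0; last by apply: addr_ge0; apply: ltW.
  by apply: addr_ge0; apply: mulr_ge0 => //; apply: ltW.
- by move=> E hE; rewrite s1z // s2z // !mulr0 addr0 mul0r.
- rewrite -mulr_suml big_split /= -!mulr_sumr s1s s2s; field => //.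
- move=> t; rewrite /marginal.
  rewrite (eq_bigr (fun E => be / (al + be) * (s1 E * (t \in E)%:R)
     + al / (al + be) * (s2 E * (t \in E)%:R))); last first.
    by move=> E _; field.
  rewrite big_split /= -!mulr_sumr -!/(marginal k _ t) hm1 hm2 /q1 /q2.
  field => //.
Qed.

End Exist.

Lemma prob_noneE (R : realType) (T : finType) k (lam : R) (s : {set T} -> R) tx :
  prob_none k lam s tx = expR (- (lam * marginal k s tx)).
Proof.
rewrite /prob_none.
set m := marginal k s tx.
have -> : series (fun n : nat => expR (- lam) * lam ^+ n / (n`!)%:R * (1 - m) ^+ n)
  = (fun n => expR (-lam) * series (exp_coeff (lam * (1 - m))) n).
  apply/funext => n; rewrite /series /= mulr_sumr; apply: eq_bigr => i _.
  rewrite /exp_coeff /= exprMn; ring.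
apply: (@cvg_lim R^o); first exact: Rhausdorff.
rewrite [X in (_ --> X)%classic](_ : _ = expR (-lam) * expR (lam * (1 - m))); last first.
  by rewrite -expRD; congr expR; ring.
apply: cvgMr.
exact: is_cvg_series_exp_coeff.
Qed.


Section Main.
Variables (R : realType) (T : finType) (k : nat) (lam : R) (v : T -> R).

Lemma marg_props (s : {set T} -> R) : mixed_strategy k s ->
  (forall t, 0 <= marginal k s t <= 1) /\ \sum_t marginal k s t = k%:R.
Proof.
move=> [s0 [sz ss]]; split.
- move=> t; apply/andP; split.
    by apply: sumr_ge0 => D _; apply: mulr_ge0 => //; apply: ler0n.
  rewrite -ss; apply: ler_sum => D _; case: (t \in D) => /=.
    by rewrite mulr1.
  by rewrite mulr0.
- rewrite /marginal exchange_big /=.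
  rewrite (eq_bigr (fun D => s D * k%:R)); last first.
    by move=> D /eqP hD; rewrite -mulr_sumr sum_ind hD.
  by rewrite -mulr_suml ss mul1r.
Qed.

Lemma p_x_eq x t : p_x k lam v x t = Num.min (Num.max (phat k lam v t - x) 0) 1.
Proof.
rewrite /p_x; set ph := phat k lam v t.
case: ifP => h1.
  by rewrite max_r ?min_l //; lra.
move/negbT: h1; rewrite -ltNge => h1.
case: ifP => h2.
  by rewrite max_l ?min_l //; lra.
move/negbT: h2; rewrite -leNgt => h2.
by rewrite max_l ?min_r //; lra.
Qed.

Lemma p_x_range x t : 0 <= p_x k lam v x t <= 1.
Proof.
rewrite /p_x; set ph := phat k lam v t.
case: ifP => h1; first by rewrite lexx ler01.
move/negbT: h1; rewrite -ltNge => h1.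
case: ifP => h2; last by rewrite ler01 lexx.
apply/andP; split; lra.
Qed.

Lemma phat_diff t u : lam != 0 -> (#|T| != 0)%N ->
  ln (v t) - lam * phat k lam v t = ln (v u) - lam * phat k lam v u.
Proof.
move=> hl hn.
have hn' : (#|T|%:R : R) != 0 by rewrite pnatr_eq0.
have e : phat k lam v t - phat k lam v u = (ln (v t) - ln (v u)) / lam.
  rewrite /phat -mulrBr opprD addrACA subrr add0r -sumrB.
  rewrite (eq_bigr (fun _ => (ln (v t) - ln (v u)) / lam)); last first.
    by move=> t' _; field; rewrite ?hl ?hn'.
  by rewrite sumr_const -mulr_natr; field; rewrite ?hl ?hn'.
apply/eqP; rewrite -subr_eq0.
have -> : ln (v t) - lam * phat k lam v t - (ln (v u) - lam * phat k lam v u)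
  = (ln (v t) - ln (v u)) - lam * (phat k lam v t - phat k lam v u) by ring.
by rewrite e; apply/eqP; field; rewrite ?hl ?hn'.
Qed.


Lemma equil (x : R) (s : {set T} -> R) : 0 < lam -> (0 < k)%N -> (k <= #|T|)%N ->
  (forall t, 0 < v t) -> mixed_strategy k s ->
  (forall t, marginal k s t = p_x k lam v x t) -> equilibrium k lam v s.
Proof.
move=> hl hk hkT hv hs hm; split => // i _ s' hs'.
have [hq hqs] := @marg_props s' hs'.
have [_ hps] := @marg_props s hs.
rewrite /utility.
pose w t := v t * expR (- (lam * marginal k s t)).
have -> : \sum_t marginal k s' t * v t * prob_none k lam s t
    = \sum_t marginal k s' t * w t.
  by apply: eq_bigr => t _; rewrite prob_noneE /w mulrA.
have -> : \sum_t marginal k s t * v t * prob_none k lam s t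
    = \sum_t marginal k s t * w t.
  by apply: eq_bigr => t _; rewrite prob_noneE /w mulrA.
have hT : (0 < #|T|)%N by apply: leq_trans hk hkT.
have /card_gt0P [u0 _] := hT.
pose K0 := ln (v u0) - lam * phat k lam v u0.
pose c := expR (K0 + lam * x).
have hw t : w t = expR (K0 + lam * (phat k lam v t - marginal k s t)).
  have ev : expR (ln (v t)) = v t by rewrite lnK //; exact: hv.
  have hn : (#|T| != 0)%N by rewrite -lt0n.
  rewrite /w /K0 -(@phat_diff t u0 (lt0r_neq0 hl) hn).
  by rewrite -{1}ev -expRD; congr expR; ring.
have key t : 0 <= (marginal k s t - marginal k s' t) * (w t - c).
  rewrite hw hm /c /p_x; set ph := phat k lam v t.
  have /andP [q0 q1] := hq t.
  case: ifP => h1.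
    apply: mulr_le0; first lra.
    rewrite subr_le0 ler_expR subr0; nra.
  move/negbT: h1; rewrite -ltNge => h1.
  case: ifP => h2.
    have -> : ph - (ph - x) = x by ring.
    by rewrite subrr mulr0.
  move/negbT: h2; rewrite -leNgt => h2.
  apply: mulr_ge0; first lra.
  rewrite subr_ge0 ler_expR; nra.
rewrite -subr_ge0 -sumrB.
have -> : \sum_t (marginal k s t * w t - marginal k s' t * w t)
   = \sum_t ((marginal k s t - marginal k s' t) * (w t - c))
     + c * \sum_t (marginal k s t - marginal k s' t).
  rewrite mulr_sumr -big_split; apply: eq_bigr => t _ /=; ring.
rewrite sumrB hps hqs subrr mulr0 addr0; apply: sumr_ge0 => t _; exact: key.
Qed.

End Main.

Theorem theorem3p2 (R : realType) (T : finType) (k : nat) (lam : R)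
  (v : T -> R) (xhat : R) :
  (0 < k)%N -> 0 < lam -> (k <= #|T|)%N -> (forall tx, 0 < v tx) ->
  xeq_lhs k lam v xhat = k%:R ->
  (forall y : R, xeq_lhs k lam v y = k%:R -> xhat <= y) ->
  (forall tx, 0 <= p_x k lam v xhat tx <= 1) /\
  \sum_(tx : T) p_x k lam v xhat tx = k%:R /\
  (exists s : {set T} -> R, mixed_strategy k s /\
      forall tx, marginal k s tx = p_x k lam v xhat tx) /\
  (forall s : {set T} -> R, mixed_strategy k s ->
      (forall tx, marginal k s tx = p_x k lam v xhat tx) ->
      equilibrium k lam v s).
Proof.
move=> hk hl hkT hv hx _.
have hsum : \sum_(tx : T) p_x k lam v xhat tx = k%:R.
  by rewrite -hx /xeq_lhs; apply: eq_bigr => t _; rewrite p_x_eq.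
split; first by move=> t; exact: p_x_range.
split; first exact: hsum.
split.
  apply: (@exist_strat R T k _ _ (leqnn _)) => //.
  by move=> t; exact: p_x_range.
by move=> s hs hm; apply: (@equil R T k lam v xhat s).
Qed.
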